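(* Let $G^\sigma$ be a lower-optimal oriented graph, let $y$ be a pendant vertex of $G$ with neighbor $x$, and let $H^\sigma=G^\sigma-y-x$. Then (i) $x$ does not lie on any cycle of $G$; (ii) $H^\sigma$ is lower-optimal.
   Context: An oriented graph $G^\sigma$ is obtained from a simple graph $G$ by assigning a direction to each edge. Its skew-adjacency matrix $S(G^\sigma)=[s_{x,y}]$ has $s_{x,y}=1$ if there is an arc from $x$ to $y$, $s_{x,y}=-1$ if there is an arc from $y$ to $x$, and $0$ otherwise; $sr(G^\sigma)$ is the rank of $S(G^\sigma)$. $\alpha(\cdot)$ is the independence number of the underlying graph. $d(G)=|E_G|-|V_G|+\omega(G)$, with $\omega(G)$ the number of components. For every oriented graph one has $sr(G^\sigma)+2\alpha(G)\geqslant 2|V_G|-2d(G)$, and $G^\sigma$ is called lower-optimal if equality holds. A pendant vertex has degree one. *)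

(* Defs.v *)
From HB Require Import structures.
From mathcomp Require Import all_boot all_order all_algebra.
Set Implicit Arguments. Unset Strict Implicit. Unset Printing Implicit Defensive.
Import Order.TTheory GRing.Theory Num.Theory.

(* An oriented graph G^sigma: vertex set V : {set T} inside a finite type T,
   arcs given by a relation o (o u v = "arc from u to v"); only arcs between
   vertices of V count. *)

Definition oriented (T : finType) (o : rel T) : Prop :=
  forall u v, o u v -> ~~ o v u.

Definition arc (T : finType) (o : rel T) (V : {set T}) (u v : T) : bool :=
  [&& u \in V, v \in V & o u v].

Definition adj (T : finType) (o : rel T) (V : {set T}) : rel T :=
  fun u v => arc o V u v || arc o V v u.

Definition skew_adj (T : finType) (o : rel T) (V : {set T}) : 'M[rat]_#|V| :=
  \matrix_(i < #|V|, j < #|V|)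
    (if arc o V (enum_val i) (enum_val j) then 1%R
     else if arc o V (enum_val j) (enum_val i) then (-1)%R else 0%R).

Definition skew_rank (T : finType) (o : rel T) (V : {set T}) : nat :=
  \rank (skew_adj o V).

Definition independent (T : finType) (o : rel T) (V S : {set T}) : bool :=
  (S \subset V) && [forall u in S, forall v in S, ~~ adj o V u v].

Definition alpha (T : finType) (o : rel T) (V : {set T}) : nat :=
  \max_(S : {set T} | independent o V S) #|S|.

(* number of edges (each edge of G carries exactly one arc) *)
Definition nedges (T : finType) (o : rel T) (V : {set T}) : nat :=
  #|[set p : T * T | arc o V p.1 p.2]|.

Definition ncomp (T : finType) (o : rel T) (V : {set T}) : nat :=
  n_comp (adj o V) (mem V).

Definition dim_cyc (T : finType) (o : rel T) (V : {set T}) : int :=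
  (nedges o V)%:Z - (#|V|)%:Z + (ncomp o V)%:Z.

Definition lower_optimal (T : finType) (o : rel T) (V : {set T}) : Prop :=
  ((skew_rank o V)%:Z + 2 * (alpha o V)%:Z
   = 2 * (#|V|)%:Z - 2 * dim_cyc o V)%R.

Definition degree (T : finType) (o : rel T) (V : {set T}) (u : T) : nat :=
  #|[set v | adj o V u v]|.

Definition on_cycle (T : finType) (o : rel T) (V : {set T}) (u : T) : Prop :=
  exists c : seq T, [&& 3 <= size c, uniq c, cycle (adj o V) c & u \in c].

(* Main.v *)
Require Import Defs.
From mathcomp Require Import all_boot all_order all_algebra zify.
From Stdlib Require Import Classical.
Import Defs.
Set Implicit Arguments. Unset Strict Implicit. Unset Printing Implicit Defensive.

Lemma arcD1 (T : finType) (o : rel T) (V : {set T}) v a b :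
  arc o (V :\ v) a b = [&& a != v, b != v & arc o V a b].
Proof. rewrite /arc !in_setD1; by case: (a != v); case: (b != v); rewrite ?andbF. Qed.

Lemma adjD1 (T : finType) (o : rel T) (V : {set T}) v a b :
  adj o (V :\ v) a b = [&& a != v, b != v & adj o V a b].
Proof. rewrite /adj !arcD1; by case: (a != v); case: (b != v). Qed.

Lemma adjC (T : finType) (o : rel T) (V : {set T}) a b : adj o V a b = adj o V b a.
Proof. by rewrite /adj orbC. Qed.

Lemma adj_in (T : finType) (o : rel T) (V : {set T}) a b :
  adj o V a b -> (a \in V) && (b \in V).
Proof. by rewrite /adj /arc; case/orP=> /and3P[-> ->]. Qed.

Lemma adj_irr (T : finType) (o : rel T) (V : {set T}) a :
  oriented o -> ~~ adj o V a a.
Proof. move=> Ho; rewrite /adj /arc orbb; apply/negP=> /and3P[_ _ h]; by move: (Ho _ _ h); rewrite h. Qed.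

Lemma adj_sym (T : finType) (o : rel T) (V : {set T}) : connect_sym (adj o V).
Proof. apply: sym_connect_sym => a b; exact: adjC. Qed.

Lemma connect_in (T : finType) (o : rel T) (V : {set T}) a b :
  connect (adj o V) a b -> a \in V -> b \in V.
Proof.
move=> c aV; have cl : closed (adj o V) (mem V).
  move=> x y /adj_in /andP[-> ->]; by [].
by rewrite -(closed_connect cl c).
Qed.

Lemma comp_del (T : finType) (o : rel T) (V : {set T}) v : v \in V ->
  ncomp o (V :\ v) + 1 <= ncomp o V +
    #|[set fingraph.root (adj o (V:\v)) u | u in [set u | adj o V v u]]|.
Proof.
move=> vV.
set e := adj o V; set e' := adj o (V :\ v).
set N := [set u | adj o V v u].
set A := [set fingraph.root e' u | u in N].
set R' := [set r | roots e' r & r \in V :\ v].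
set R := [set r | roots e r & r \in V].
have -> : ncomp o (V:\v) = #|R'|.
  by rewrite /ncomp; apply: eq_card => r; rewrite !inE.
have -> : ncomp o V = #|R|.
  by rewrite /ncomp; apply: eq_card => r; rewrite !inE.
set B := R' :\: A.
have symE : connect_sym e by apply: adj_sym.
have symE' : connect_sym e' by apply: adj_sym.
have K : forall r, r \in B -> forall w, connect e r w -> (w != v) && connect e' r w.
  move=> r; rewrite !inE => /and3P[rA /eqP rr /andP[rv rV]] w /connectP[p pth ->].
  have gen : forall p a, a != v -> connect e' r a -> path e a p ->
      (last a p != v) && connect e' r (last a p).
    elim=> [|b q IH] a av ca /=; first by rewrite av ca.
    case/andP=> eab pth'.
    have bv : b != v.
      apply/eqP=> bv; subst b.
      move/negP: rA; apply; apply/imsetP; exists a.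
        by rewrite inE /e adjC.
      by rewrite -{1}rr; apply/(fingraph.rootP symE').
    apply: IH => //.
    apply: (connect_trans ca); apply: connect1.
    by rewrite /e' adjD1 av bv.
  by apply: gen => //; exact: connect0.
have rvR : fingraph.root e v \in R.
  rewrite inE roots_root //=.
  exact: (connect_in (connect_root e v) vV).
have hB : #|B| + 1 <= #|R|.
  have inj : {in B &, injective (fingraph.root e)}.
    move=> r1 r2 r1B r2B /(fingraph.rootP symE) c12.
    have /andP[_ c'] := K r1 r1B r2 c12.
    move: r1B r2B; rewrite !inE => /and3P[_ /eqP h1 _] /and3P[_ /eqP h2 _].
    apply: (etrans (esym h1)); apply: (etrans _ h2); exact/(fingraph.rootP symE').
  have sub : [set fingraph.root e r | r in B] \subset R :\ fingraph.root e v.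
    apply/subsetP=> z /imsetP[r rB ->].
    rewrite !inE roots_root //=.
    have rV : r \in V.
      by move: rB; rewrite !inE => /and3P[_ _ /andP[]].
    rewrite (connect_in (connect_root e r) rV) andbT.
    apply/eqP=> /(fingraph.rootP symE) crv.
    by have := K r rB v crv; rewrite eqxx.
  have := subset_leq_card sub; rewrite card_in_imset //.
  rewrite (cardsD1 (fingraph.root e v) R) rvR; lia.
have hR' : #|R'| <= #|A| + #|B|.
  have sub : R' \subset A :|: B.
    by apply/subsetP=> r rR; rewrite in_setU in_setD rR andbT orbN.
  have := subset_leq_card sub; rewrite cardsU; lia.
lia.
Qed.

Lemma cycle_nbrs (T : finType) (o : rel T) (V : {set T}) v :
  on_cycle o V v -> exists u1 u2, [/\ adj o V v u1, adj o V v u2, u1 != u2 &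
     connect (adj o (V :\ v)) u1 u2].
Proof.
case=> c /and4P[sz uc cy vc].
case: (rot_to vc) => i s hrot.
have := rot_uniq i c; have := rot_cycle i (adj o V) c; have := size_rot i c.
rewrite hrot => hs hcy hu; rewrite -hcy in cy; rewrite -hu in uc; rewrite -hs in sz.
clear hs hcy hu; move: s hrot sz cy uc => [|u1 [|a s1]] //= hrot sz.
case/and3P=> vu1 u1a; rewrite rcons_path => /andP[pth elast].
move=> /and4P[vnin u1nin _ _].
exists u1, (last a s1); split => //.
- by rewrite adjC.
- apply/negP=> /eqP h; move: u1nin; rewrite {1}h.
  by rewrite mem_last.
apply/connectP; exists (a :: s1) => //.
apply: (@sub_in_path _ (predC1 v) (adj o V)).
- move=> x y xv yv exy. rewrite !inE in xv yv; by rewrite adjD1 xv yv.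
- apply/allP=> z zs; rewrite inE; apply/eqP=> zv; subst z.
  by move: vnin; rewrite zs.
by rewrite /= u1a.
Qed.

Lemma deg_img (T : finType) (o : rel T) (V : {set T}) v :
  #|[set fingraph.root (adj o (V:\v)) u | u in [set u | adj o V v u]]| <= degree o V v.
Proof. exact: leq_imset_card. Qed.

Lemma deg_img_cycle (T : finType) (o : rel T) (V : {set T}) v : on_cycle o V v ->
  #|[set fingraph.root (adj o (V:\v)) u | u in [set u | adj o V v u]]| + 1 <= degree o V v.
Proof.
move=> /cycle_nbrs [u1 [u2 [a1 a2 ne c]]].
set N := [set u | adj o V v u].
have -> : [set fingraph.root (adj o (V:\v)) u | u in N] =
          [set fingraph.root (adj o (V:\v)) u | u in N :\ u2].
  apply/setP=> z; apply/imsetP/imsetP=> [[u uN ->]|[u]]; last first.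
    by rewrite inE => /andP[_ uN] ->; exists u.
  case: (eqVneq u u2) => [->|uu2].
    exists u1; first by rewrite !inE ne a1.
    by apply/(fingraph.rootP (adj_sym o (V:\v))); rewrite (adj_sym o (V:\v)).
  by exists u; rewrite ?in_setD1 ?uu2 ?uN.
have := leq_imset_card (fingraph.root (adj o (V:\v))) (N :\ u2).
rewrite /degree -/N (cardsD1 u2 N) inE a2 /nat_of_bool addn1 add1n ltnS; exact.
Qed.

Lemma edges_del (T : finType) (o : rel T) (V : {set T}) v : oriented o ->
  nedges o (V :\ v) + degree o V v <= nedges o V.
Proof.
move=> Ho.
set P' := [set p : T * T | arc o (V :\ v) p.1 p.2].
set P := [set p : T * T | arc o V p.1 p.2].
set Q := [set p in P | (p.1 == v) || (p.2 == v)].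
have hQ : degree o V v <= #|Q|.
  have sub : [set u | adj o V v u] \subset
     [set (if p.1 == v then p.2 else p.1) | p in Q].
    apply/subsetP=> u; rewrite inE => avu.
    have uv : u != v by apply/eqP=> h; subst u; move: (adj_irr V v Ho); rewrite avu.
    apply/imsetP; move: (avu); rewrite /adj => /orP[h|h].
      by exists (v, u); rewrite /= ?eqxx // !inE /= h eqxx.
    by exists (u, v); rewrite /= ?(negbTE uv) // !inE /= h eqxx orbT.
  apply: (leq_trans (subset_leq_card sub)); exact: leq_imset_card.
have disj : P' :&: Q = set0.
  apply/setP=> p; rewrite !inE arcD1.
  by case: (p.1 == v); case: (p.2 == v); rewrite ?andbF.
have sub : P' :|: Q \subset P.
  apply/subsetP=> p; rewrite !inE arcD1 => /orP[/and3P[_ _ ->]|/andP[->]] //.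
have := subset_leq_card sub; have := cardsUI P' Q; rewrite disj cards0.
rewrite /nedges -/P -/P'; lia.
Qed.

Import GRing.Theory.
Local Open Scope ring_scope.

Lemma rank_mxsub (F : fieldType) m n m' n' (f : 'I_m' -> 'I_m) (g : 'I_n' -> 'I_n)
  (A : 'M[F]_(m, n)) : (\rank (mxsub f g A) <= \rank A)%N.
Proof.
rewrite -[A in mxsub _ _ A]mulmx1 mxsub_mul.
apply: (leq_trans (mxrankM_maxl _ _)).
rewrite rowsubE; exact: mxrankM_maxr.
Qed.

Lemma rank_pivot_row (F : fieldType) m n (A : 'M[F]_(1 + m, 1 + n)) :
  ursubmx A = 0 -> ulsubmx A != 0 -> (1 + \rank (drsubmx A) <= \rank A)%N.
Proof.
move=> hur hul.
set a := ulsubmx A; set C := dlsubmx A; set D := drsubmx A.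
set c := a 0 0.
have ha : a = c%:M by apply: mx11_scalar.
have c0 : c != 0.
  by apply: contraNneq hul => hc; rewrite -/a ha hc raddf0.
set L := block_mx (1%:M : 'M_1) 0 (- (c^-1 *: C)) (1%:M : 'M_m).
have hLA : L *m A = block_mx a 0 0 D.
  rewrite -[A in L *m A]submxK hur mulmx_block.
  rewrite !mul1mx !mul0mx !mulmx0 !addr0 !add0r.
  congr block_mx.
  by rewrite -/a -/C ha mulNmx -scalemxAl mul_mx_scalar scalerA mulVf // scale1r addNr.
have : (\rank (L *m A) <= \rank A)%N by exact: mxrankM_maxr.
rewrite hLA rank_diag_block_mx.
have -> : \rank a = 1%N.
  apply/eqP; rewrite eqn_leq rank_leq_row /= lt0n mxrank_eq0; exact: hul.
by [].
Qed.

Lemma rank_pivot_col (F : fieldType) m n (A : 'M[F]_(1 + m, 1 + n)) :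
  dlsubmx A = 0 -> ulsubmx A != 0 -> (1 + \rank (drsubmx A) <= \rank A)%N.
Proof.
move=> hdl hul.
have h := @rank_pivot_row F n m A^T.
rewrite -trmx_dlsub -trmx_ulsub -trmx_drsub !mxrank_tr hdl trmx0 in h.
apply: h => //.
by apply: contraNneq hul => h; rewrite -[ulsubmx A]trmxK h trmx0.
Qed.

Import GRing.Theory.
Local Open Scope ring_scope.

Definition sent (T : finType) (o : rel T) (V : {set T}) (a b : T) : rat :=
  if arc o V a b then 1 else if arc o V b a then -1 else 0.

Definition Sm (T : finType) (o : rel T) (V : {set T}) p q (h1 : 'I_p -> T) (h2 : 'I_q -> T)
  : 'M[rat]_(p, q) := \matrix_(i, j) sent o V (h1 i) (h2 j).

Lemma skew_adjE (T : finType) (o : rel T) (V : {set T}) :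
  skew_adj o V = Sm o V enum_val enum_val.
Proof. by apply/matrixP=> i j; rewrite !mxE. Qed.

Lemma Sm_rank (T : finType) (o : rel T) (V : {set T}) p q (h1 : 'I_p -> T) (h2 : 'I_q -> T) :
  (forall i, h1 i \in V) -> (forall j, h2 j \in V) ->
  (\rank (Sm o V h1 h2) <= skew_rank o V)%N.
Proof.
move=> H1 H2.
case: (pickP (mem V)) => [x0 x0V | none].
  have -> : Sm o V h1 h2 = mxsub (fun i => enum_rank_in x0V (h1 i))
                                 (fun j => enum_rank_in x0V (h2 j)) (skew_adj o V).
    apply/matrixP=> i j; rewrite !mxE !enum_rankK_in //.
  exact: rank_mxsub.
case: p h1 H1 => [|p] h1 H1.
  by apply: (leq_trans (rank_leq_row _)).
by have := none (h1 ord0); rewrite /= H1.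
Qed.

Lemma arc_sub (T : finType) (o : rel T) (V W : {set T}) a b :
  W \subset V -> a \in W -> b \in W -> arc o W a b = arc o V a b.
Proof.
move=> /subsetP sWV aW bW; by rewrite /arc aW bW (sWV _ aW) (sWV _ bW).
Qed.

Lemma sent_sub (T : finType) (o : rel T) (V W : {set T}) a b :
  W \subset V -> a \in W -> b \in W -> sent o W a b = sent o V a b.
Proof. by move=> s aW bW; rewrite /sent !(arc_sub o s aW bW) !(arc_sub o s bW aW). Qed.

Lemma sr_sub (T : finType) (o : rel T) (V W : {set T}) :
  W \subset V -> (skew_rank o W <= skew_rank o V)%N.
Proof.
move=> s.
have -> : skew_rank o W = \rank (Sm o V (@enum_val _ (mem W)) (@enum_val _ (mem W))).
  rewrite /skew_rank skew_adjE; congr (\rank _); apply/matrixP=> i j.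
  by rewrite !mxE (sent_sub o s) // enum_valP.
by apply: Sm_rank => i; apply: (subsetP s); apply: enum_valP.
Qed.

Lemma sent0 (T : finType) (o : rel T) (V : {set T}) a b :
  ~~ adj o V a b -> sent o V a b = 0.
Proof. by rewrite /sent /adj negb_or => /andP[/negbTE -> /negbTE ->]. Qed.

Lemma sent_ne0 (T : finType) (o : rel T) (V : {set T}) a b :
  adj o V a b -> sent o V a b != 0.
Proof.
rewrite /sent /adj; case: (arc o V a b) => /=; first by [].
by move=> ->.
Qed.

Lemma splitL m n (i : 'I_m) : split (lshift n i) = inl i.
Proof. exact: (unsplitK (inl i)). Qed.
Lemma splitR m n (j : 'I_n) : split (rshift m j) = inr j.
Proof. exact: (unsplitK (inr j)). Qed.

Lemma sr_pendant (T : finType) (o : rel T) (V : {set T}) x y :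
  y \in V -> (forall w, adj o V y w = (w == x)) -> x != y ->
  (2 + skew_rank o (V :\ y :\ x) <= skew_rank o V)%N.
Proof.
move=> yV Ny xy.
have yx : adj o V y x by rewrite Ny.
have xV : x \in V by have /andP[] := adj_in yx.
set W := V :\ y :\ x.
have sWV : W \subset V by apply/subsetP=> w; rewrite !inE => /and3P[].
set k := #|W|.
pose hW := @enum_val _ (mem W).
have hWx : forall l, hW l != x by move=> l; have := enum_valP l; rewrite !inE => /andP[].
have hWy : forall l, hW l != y by move=> l; have := enum_valP l; rewrite !inE => /and3P[].
pose h1 := fun i : 'I_(1 + (1 + k)) => match split i with inl _ => y
             | inr j => match split j with inl _ => x | inr l => hW l end end.
pose h2 := fun i : 'I_(1 + (1 + k)) => match split i with inl _ => x
             | inr j => match split j with inl _ => y | inr l => hW l end end.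
have hV : forall l, hW l \in V by move=> l; apply: (subsetP sWV); apply: enum_valP.
have H1 : forall i, h1 i \in V.
  by move=> i; rewrite /h1; case: (split i) => // j; case: (split j).
have H2 : forall i, h2 i \in V.
  by move=> i; rewrite /h2; case: (split i) => // j; case: (split j).
set N := Sm o V h1 h2.
apply: (@leq_trans (\rank N)); last exact: (@Sm_rank _ o V _ _ h1 h2 H1 H2).
have adjyy : ~~ adj o V y y by rewrite Ny eq_sym.
have s1 : (1 + \rank (drsubmx N) <= \rank N)%N.
  apply: rank_pivot_row.
  - apply/matrixP=> i j; rewrite !mxE /h1 /h2 splitL splitR.
    case: (split j) => [j'|l]; apply: sent0; first exact: adjyy.
    by rewrite Ny (negbTE (hWx l)).
  - apply/negP=> /eqP /matrixP /(_ 0 0); rewrite !mxE /h1 /h2 !splitL => /eqP.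
    by apply/negP; apply: sent_ne0.
have s2 : (1 + \rank (drsubmx (drsubmx N)) <= \rank (drsubmx N))%N.
  apply: rank_pivot_col.
  - apply/matrixP=> i j; rewrite !mxE /h1 /h2 ?splitR ?splitL ?splitR ?splitL.
    by apply: sent0; rewrite adjC Ny (negbTE (hWx i)).
  - apply/negP=> /eqP /matrixP /(_ 0 0); rewrite !mxE /h1 /h2 ?splitR ?splitL ?splitR ?splitL => /eqP.
    by apply/negP; apply: sent_ne0; rewrite adjC.
have e : drsubmx (drsubmx N) = skew_adj o W.
  apply/matrixP=> i j; rewrite skew_adjE !mxE /h1 /h2 !splitR.
  by rewrite (sent_sub o sWV) ?enum_valP.
rewrite e in s2; rewrite /skew_rank. apply: (leq_trans _ s1). rewrite -[2%N]/(1 + 1)%N -addnA leq_add2l. exact: s2.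
Qed.

Local Close Scope ring_scope.

Lemma adj_sub (T : finType) (o : rel T) (V W : {set T}) a b :
  W \subset V -> a \in W -> b \in W -> adj o W a b = adj o V a b.
Proof. by move=> s aW bW; rewrite /adj !(arc_sub o s aW bW) !(arc_sub o s bW aW). Qed.

Lemma alpha_ge (T : finType) (o : rel T) (V S : {set T}) :
  independent o V S -> #|S| <= alpha o V.
Proof. move=> h; exact: (@leq_bigmax_cond _ (independent o V) (fun S => #|S|) S h). Qed.

Lemma alpha_wit (T : finType) (o : rel T) (V : {set T}) :
  exists S, independent o V S /\ #|S| = alpha o V.
Proof.
have i0 : independent o V set0.
  by rewrite /independent sub0set; apply/forallP=> u; rewrite inE.
have : 0 < #|independent o V|.
  by apply/card_gt0P; exists set0.
case/(@eq_bigmax_cond _ _ (fun S : {set T} => #|S|)) => S Si hS.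
by exists S; split => //; rewrite /alpha hS.
Qed.

Lemma indep_sub (T : finType) (o : rel T) (V W S : {set T}) :
  W \subset V -> independent o W S -> independent o V S.
Proof.
move=> sWV /andP[sSW /forallP h]; apply/andP; split; first exact: subset_trans sSW sWV.
apply/forallP=> u; apply/implyP=> uS; apply/forallP=> v; apply/implyP=> vS.
have := h u; rewrite uS => /forallP /(_ v); rewrite vS /=.
by rewrite (adj_sub o sWV) ?(subsetP sSW).
Qed.

Lemma alpha_sub (T : finType) (o : rel T) (V W : {set T}) :
  W \subset V -> alpha o W <= alpha o V.
Proof.
move=> s; have [S [Si <-]] := alpha_wit o W.
by apply: alpha_ge; apply: indep_sub Si.
Qed.

Lemma alpha_add (T : finType) (o : rel T) (V W : {set T}) v : oriented o ->
  W \subset V -> v \in V -> v \notin W -> (forall u, u \in W -> ~~ adj o V v u) ->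
  alpha o W + 1 <= alpha o V.
Proof.
move=> Ho sWV vV vW hv.
have [S [/andP[sSW /forallP Si] <-]] := alpha_wit o W.
have vS : v \notin S by apply: contra vW; apply: (subsetP sSW).
have -> : #|S| + 1 = #|v |: S| by rewrite cardsU1 vS addnC.
apply: alpha_ge; apply/andP; split.
  by apply/subsetP=> u; rewrite !inE => /orP[/eqP ->|/(subsetP sSW)/(subsetP sWV)].
apply/forallP=> a; apply/implyP=> aS; apply/forallP=> b; apply/implyP=> bS.
move: aS bS; rewrite !inE => /orP[/eqP->|aS] /orP[/eqP->|bS].
- exact: adj_irr.
- exact: hv (subsetP sSW _ bS).
- by rewrite adjC; exact: hv (subsetP sSW _ aS).
- have := Si a; rewrite aS => /forallP /(_ b); rewrite bS /=.
  by rewrite (adj_sub o sWV) ?(subsetP sSW).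
Qed.

Lemma close_cycle (T : finType) (o : rel T) (V : {set T}) a t : oriented o ->
  1 < degree o V a -> uniq (a :: t) -> path (adj o V) a t ->
  (forall w, adj o V a w -> w \in a :: t) -> exists u, on_cycle o V u.
Proof.
move=> Ho hd hu hp hall.
have hin : forall w, adj o V a w -> w \in t.
  move=> w aw; have := hall w aw; rewrite inE => /orP[/eqP e|//].
  by subst w; move: (adj_irr V a Ho); rewrite aw.
case/card_gt1P: hd => w1 [w2 []]; rewrite !inE => a1 a2 ne.
case: t hu hp hall hin => [|h t] hu hp hall hin; first by have := hin w1 a1.
have [w [aw wt wh]] : exists w, [/\ adj o V a w, w \in h :: t & w != h].
  case: (eqVneq w1 h) => [e1|n1].
    by exists w2; split => //; [exact: hin | rewrite -e1 eq_sym].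
  by exists w1; split => //; exact: hin.
move: wt; rewrite inE (negbTE wh) /= => wt.
case/splitPr: wt hu hp => t1 t2 hu hp.
exists a, (a :: h :: t1 ++ [:: w]).
apply/and4P; split.
- by rewrite /= size_cat /= addn1.
- have e : [:: a, h & t1 ++ w :: t2] = [:: a, h & t1 ++ [:: w]] ++ t2 by rewrite /= -catA.
  move: hu; rewrite e.
  by rewrite cat_uniq => /andP[].
- rewrite /= rcons_path.
  move: hp; rewrite -cat_cons cat_path /= => /andP[/andP[ah pt] /andP[lw _]].
  by rewrite cat_path last_cat /= ah pt lw adjC aw.
- by rewrite mem_head.
Qed.

Lemma cycle_exists_rec (T : finType) (o : rel T) (V : {set T}) : oriented o ->
  (forall v, v \in V -> 1 < degree o V v) ->
  forall k a t, #|T| - size (a :: t) <= k -> uniq (a :: t) -> path (adj o V) a t ->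
  a \in V -> exists u, on_cycle o V u.
Proof.
move=> Ho Hdeg; elim=> [|k IH] a t hk hu hp aV;
  (case: (boolP [exists w, adj o V a w && (w \notin a :: t)]) =>
     [/existsP[w /andP[aw wn]] | /existsPn hall];
   last by apply: (close_cycle Ho (Hdeg a aV) hu hp) => w aw;
           have := hall w; rewrite aw /= negbK).
- have : uniq (w :: a :: t) by rewrite cons_uniq wn hu.
  move/card_uniqP => hc; have := max_card (mem (w :: a :: t)).
  rewrite hc /= in hk *; lia.
- apply: (IH w (a :: t)).
  + move: hk => /=; lia.
  + by rewrite cons_uniq wn hu.
  + by rewrite /= adjC aw hp.
  + by have /andP[] := adj_in aw.
Qed.

Lemma cycle_exists (T : finType) (o : rel T) (V : {set T}) a : oriented o ->
  (forall v, v \in V -> 1 < degree o V v) -> a \in V -> exists u, on_cycle o V u.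
Proof.
move=> Ho Hd aV; apply: (@cycle_exists_rec T o V Ho Hd #|T| a [::]) => //=.
lia.
Qed.

Definition Qd (T : finType) (o : rel T) (V : {set T}) := nedges o V + ncomp o V.

Lemma Q_del (T : finType) (o : rel T) (V : {set T}) v : oriented o -> v \in V ->
  Qd o (V :\ v) + 1 <= Qd o V.
Proof.
move=> Ho vV; have := comp_del o vV; have := deg_img o V v; have := edges_del V v Ho.
rewrite /Qd; lia.
Qed.

Lemma Q_del_cycle (T : finType) (o : rel T) (V : {set T}) v : oriented o -> v \in V ->
  on_cycle o V v -> Qd o (V :\ v) + 2 <= Qd o V.
Proof.
move=> Ho vV cy; have := comp_del o vV; have := deg_img_cycle cy; have := edges_del V v Ho.
rewrite /Qd; lia.
Qed.

Lemma on_cycle_in (T : finType) (o : rel T) (V : {set T}) v : on_cycle o V v -> v \in V.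
Proof.
case/cycle_nbrs=> u1 [u2 [a1 _ _ _]]; by have /andP[] := adj_in a1.
Qed.

Lemma nbr1 (T : finType) (o : rel T) (V : {set T}) y : degree o V y = 1 ->
  exists x, forall w, adj o V y w = (w == x).
Proof.
move/eqP/cards1P=> [x hx]; exists x => w.
have := congr1 (fun S : {set T} => w \in S) hx; by rewrite /= !inE.
Qed.

Lemma setD1C (T : finType) (V : {set T}) x y : V :\ x :\ y = V :\ y :\ x.
Proof. by apply/setP=> z; rewrite !inE; case: (z == x); case: (z == y). Qed.

Lemma lower_bound (T : finType) (o : rel T) : oriented o ->
  forall n (V : {set T}), #|V| <= n ->
  4 * #|V| <= skew_rank o V + 2 * alpha o V + 2 * Qd o V.
Proof.
move=> Ho; elim=> [|n IH] V hV.
  by have -> : #|V| = 0 by lia.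
case: (classic (exists v, v \in V /\ on_cycle o V v)) => [[v [vV cy]]|nocy].
  have := IH (V :\ v); rewrite (cardsD1 v V) vV in hV.
  move/(_ ltac:(lia)).
  have := sr_sub o (subD1set V v); have := alpha_sub o (subD1set V v).
  have := Q_del_cycle Ho vV cy; rewrite (cardsD1 v V) vV; lia.
case: (boolP [exists v, (v \in V) && (degree o V v == 0)]).
  case/existsP=> v /andP[vV /eqP d0].
  have := IH (V :\ v); rewrite (cardsD1 v V) vV in hV.
  move/(_ ltac:(lia)).
  have := sr_sub o (subD1set V v).
  have := @alpha_add T o V (V :\ v) v Ho (subD1set V v) vV.
  rewrite !inE eqxx /= => /(_ isT).
  move/(_ ltac:(move=> u _; apply/negP=> au;
      move: d0; rewrite /degree => /eqP; rewrite cards_eq0 => /eqP/setP/(_ u);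
      rewrite !inE au)).
  have := Q_del Ho vV; rewrite (cardsD1 v V) vV; lia.
move=> /existsPn nodeg0.
case: (boolP [exists v, (v \in V) && (degree o V v == 1)]).
  case/existsP=> y /andP[yV /eqP d1].
  have [x Ny] := nbr1 d1.
  have yx : adj o V y x by rewrite Ny.
  have /andP[_ xV] := adj_in yx.
  have xy : x != y by apply/eqP=> e; subst x; move: (adj_irr V y Ho); rewrite yx.
  set W := V :\ y :\ x.
  have sWV : W \subset V by apply/subsetP=> w; rewrite !inE => /and3P[].
  have cW : #|V| = #|W| + 2.
    rewrite (cardsD1 y V) yV (cardsD1 x (V :\ y)) !inE xy xV /= -/W; lia.
  have := IH W; rewrite cW in hV; move/(_ ltac:(lia)).
  have := sr_pendant yV Ny xy.
  have := @alpha_add T o V W y Ho sWV yV.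
  rewrite !inE eqxx andbF /= => /(_ isT).
  move/(_ ltac:(move=> u; rewrite !inE => /andP[ux _]; rewrite Ny ux)).
  have yV1 : y \in V :\ x by rewrite !inE eq_sym xy.
  have := Q_del Ho xV; have := Q_del Ho yV1; rewrite setD1C -/W.
  rewrite cW; lia.
move=> /existsPn nodeg1.
case: (pickP (mem V)) => [a aV|none]; last first.
  by have -> : #|V| = 0 by apply/eqP; rewrite cards_eq0; apply/eqP/setP=> z; rewrite in_set0; apply: none.
have Hd : forall v, v \in V -> 1 < degree o V v.
  move=> v vV; have := nodeg0 v; have := nodeg1 v; rewrite vV /=; lia.
case: (cycle_exists Ho Hd aV) => u cy.
by case: nocy; exists u; split => //; apply: on_cycle_in cy.
Qed.

Lemma LO_nat (T : finType) (o : rel T) (V : {set T}) :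
  lower_optimal o V <-> skew_rank o V + 2 * alpha o V + 2 * Qd o V = 4 * #|V|.
Proof. rewrite /lower_optimal /dim_cyc /Qd; split; lia. Qed.

Unset Implicit Arguments.
Theorem lemma2p6 (T : finType) (o : rel T) (V : {set T}) (x y : T) :
  oriented o ->
  lower_optimal o V ->
  y \in V -> degree o V y = 1 -> adj o V y x ->
  ~ on_cycle o V x /\ lower_optimal o (V :\ y :\ x).
Proof.
move=> Ho /LO_nat LO yV d1 yx.
have [x' Ny'] := nbr1 d1.
have Ny : forall w, adj o V y w = (w == x).
  by move=> w; rewrite Ny'; have := Ny' x; rewrite yx => /esym/eqP ->.
have /andP[_ xV] := adj_in yx.
have xy : x != y by apply/eqP=> e; subst x; move: (adj_irr V y Ho); rewrite yx.
set W := V :\ y :\ x.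
have sWV : W \subset V by apply/subsetP=> w; rewrite !inE => /and3P[].
have cW : #|V| = #|W| + 2.
  rewrite (cardsD1 y V) yV (cardsD1 x (V :\ y)) !inE xy xV /= -/W; lia.
have LB := lower_bound Ho (leqnn #|W|).
have := sr_pendant yV Ny xy.
have := @alpha_add T o V W y Ho sWV yV.
rewrite !inE eqxx andbF /= => /(_ isT).
move/(_ ltac:(move=> u; rewrite !inE => /andP[ux _]; rewrite Ny ux)).
have yV1 : y \in V :\ x by rewrite !inE eq_sym xy.
have := Q_del Ho yV1; rewrite setD1C -/W => hQ2 hA hS.
split.
  move=> cy; have := Q_del_cycle Ho xV cy; lia.
apply/LO_nat; have := Q_del Ho xV; lia.
Qed.
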